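(* Let $F$ be the elementary cellular automaton with rule number 27. For every nonempty finite word $u\in\{0,1\}^*$, the deterministic communication complexity of $\textsc{SInv}_{F,u}$ restricted to inputs of length $n$ is bounded by a constant independent of $n$.
   Context: An elementary cellular automaton (ECA) with rule number $N\in\{0,\dots,255\}$ is the map $F:\{0,1\}^{\mathbb Z}\to\{0,1\}^{\mathbb Z}$ given by $F(x)_i=f(x_{i-1},x_i,x_{i+1})$. Here the local rule $f:\{0,1\}^3\to\{0,1\}$ is determined by $N=\sum_{a,b,c\in\{0,1\}}2^{4a+2b+c}f(a,b,c)$. For a nonempty finite word $u$, $p_u\in\{0,1\}^{\mathbb Z}$ is defined by $(p_u)_i=u_{i\bmod |u|}$. For a finite word $x$, $p_u[x]$ is the configuration equal to $x$ on positions $0,\dots,|x|-1$ and to $p_u$ elsewhere. $\textsc{SInv}_{F,u}$ is the decision problem: on input a finite word $x$, decide whether there is an integer $w$ such that for all $t\ge0$ the set of positions where $F^t(p_u)$ and $F^t(p_u[x])$ differ is contained in an interval of length $w$. For each $n$, it is regarded as a function $\{0,1\}^n\to\{0,1\}$. For a function $g:X\times Y\to Z$, $D(g)$ is the minimal depth of a deterministic two-party protocol computing $g$. In such a protocol, Alice knows $x$ and Bob knows $y$. The protocol is a binary tree: each internal node is labelled by a function of Alice's input only or of Bob's input only, with values in $\{\text{left},\text{right}\}$, and each leaf is labelled by an output value. For $g:\{0,1\}^m\to Z$, set $D(g)=\max_{0\le i<m}D(g_i)$, where $g_i:\{0,1\}^i\times\{0,1\}^{m-i}\to Z$ is $g_i(x,y)=g(xy)$.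 *)

(* Defs.v *)
From Stdlib Require Import ZArith List Arith Bool.
Import ListNotations.
Open Scope Z_scope.

Definition config := Z -> bool.

Definition local_rule (N : nat) (a b c : bool) : bool :=
  Nat.testbit N (4 * Nat.b2n a + 2 * Nat.b2n b + Nat.b2n c)%nat.

Definition eca (N : nat) (x : config) : config :=
  fun i => local_rule N (x (i - 1)) (x i) (x (i + 1)).

Definition periodic (u : list bool) : config :=
  fun i => nth (Z.to_nat (i mod Z.of_nat (length u))) u false.

Definition patch (u x : list bool) : config :=
  fun i => if (0 <=? i) && (i <? Z.of_nat (length x))
           then nth (Z.to_nat i) x false
           else periodic u i.

Definition SInv (N : nat) (u x : list bool) : Prop :=
  exists w : nat, forall t : nat, exists a : Z, forall i : Z,
    Nat.iter t (eca N) (periodic u) i <> Nat.iter t (eca N) (patch u x) i ->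
    a <= i < a + Z.of_nat w.

(** Deterministic two-party protocols (binary trees); node functions return
    false = left, true = right; leaves are labelled by the output in {0,1}. *)
Inductive protocol (X Y : Type) : Type :=
| Leaf : bool -> protocol X Y
| AliceNode : (X -> bool) -> protocol X Y -> protocol X Y -> protocol X Y
| BobNode : (Y -> bool) -> protocol X Y -> protocol X Y -> protocol X Y.

Arguments Leaf {X Y}.
Arguments AliceNode {X Y}.
Arguments BobNode {X Y}.

Fixpoint eval {X Y : Type} (P : protocol X Y) (x : X) (y : Y) : bool :=
  match P with
  | Leaf b => b
  | AliceNode f l r => if f x then eval r x y else eval l x y
  | BobNode g l r => if g y then eval r x y else eval l x y
  end.

Fixpoint depth {X Y : Type} (P : protocol X Y) : nat :=
  match P with
  | Leaf _ => 0
  | AliceNode _ l r => S (Nat.max (depth l) (depth r))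
  | BobNode _ l r => S (Nat.max (depth l) (depth r))
  end.

(** D(g restricted to {0,1}^n) <= k, where g is a decision problem on words:
    for every split point 0 <= i < n there is a protocol of depth <= k, Alice
    holding x in {0,1}^i and Bob holding y in {0,1}^(n-i), computing g(xy). *)
Definition comm_complexity_le (g : list bool -> Prop) (n k : nat) : Prop :=
  forall i : nat, (i < n)%nat ->
    exists P : protocol (list bool) (list bool),
      (depth P <= k)%nat /\
      forall x y : list bool, length x = i -> length y = (n - i)%nat ->
        (eval P x y = true <-> g (x ++ y)).

(* Main.v *)
Require Import Defs.
From Stdlib Require Import ZArith List Arith Bool Lia FunctionalExtensionality Classical ClassicalDescription.
Import ListNotations.
Open Scope Z_scope.


Definition Fc := eca 27.
Definition act (y : config) (i : Z) : bool :=
  negb (y (i-1)) && y (i+1) && negb (y (i+2)).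
Definition H (y : config) : config := fun i => if act y i then y (i+3) else y i.

Lemma FH : forall c i, Fc (Fc (Fc c)) i = H (Fc c) (i-1).
Proof.
  intros c i. unfold Fc, eca, H, act, local_rule.
  repeat match goal with |- context [c ?e] => progress (ring_simplify e) end.
  destruct (c (i-3)), (c (i-2)), (c (i-1)), (c i), (c (i+1)), (c (i+2)), (c (i+3)); reflexivity.
Qed.

Lemma act_H : forall y i, act (H y) i = act y i.
Proof.
  intros y i. unfold H, act.
  repeat match goal with |- context [y ?e] => progress (ring_simplify e) end.
  destruct (y (i-2)), (y (i-1)), (y i), (y (i+1)), (y (i+2)), (y (i+3)), (y (i+4)), (y (i+5)); reflexivity.
Qed.

Definition Hs (s : nat) (y : config) : config := Nat.iter s H y.

Lemma act_Hs : forall s y i, act (Hs s y) i = act y i.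
Proof.
  induction s; intros y i; simpl; [reflexivity|].
  unfold Hs in *. simpl. rewrite act_H. apply IHs.
Qed.

Lemma Hs_S : forall s y i, Hs (S s) y i = if act y i then Hs s y (i+3) else y i.
Proof.
  induction s; intros y i.
  - reflexivity.
  - change (Hs (S (S s)) y) with (H (Hs (S s) y)).
    unfold H at 1. rewrite act_Hs.
    destruct (act y i) eqn:E; [reflexivity|].
    rewrite IHs, E. reflexivity.
Qed.

Lemma Hs_inact : forall s y i, act y i = false -> Hs s y i = y i.
Proof.
  destruct s; intros y i E; [reflexivity|]. rewrite Hs_S, E. reflexivity.
Qed.

Lemma Hs_act : forall s y i, act y i = true -> Hs (S s) y i = Hs s y (i+3).
Proof. intros s y i E. rewrite Hs_S, E. reflexivity. Qed.

Definition tr (d : Z) (y : config) : config := fun j => y (j + d).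

Lemma H_tr : forall d y j, H (tr d y) j = H y (j + d).
Proof.
  intros d y j. unfold H, act, tr.
  repeat match goal with |- context [y ?e] => progress (ring_simplify e) end.
  reflexivity.
Qed.

Lemma iter_odd : forall s c i,
  Nat.iter (2*s+1) Fc c i = Hs s (Fc c) (i - Z.of_nat s).
Proof.
  induction s; intros c i.
  - simpl. f_equal. lia.
  - replace (2 * S s + 1)%nat with (S (S (S (2*s))))%nat by lia.
    change (Nat.iter (S (S (S (2 * s)))) Fc c i) with (Fc (Fc (Fc (Nat.iter (2*s) Fc c))) i).
    rewrite FH.
    change (Fc (Nat.iter (2*s) Fc c)) with (Nat.iter (S (2*s)) Fc c).
    assert (E : Nat.iter (S (2*s)) Fc c = tr (- Z.of_nat s) (Hs s (Fc c))).
    { apply functional_extensionality. intro j. unfold tr.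
      replace (S (2*s)) with (2*s+1)%nat by lia. rewrite IHs. reflexivity. }
    rewrite E, H_tr. rewrite Nat2Z.inj_succ.
    change (Hs (S s) (Fc c)) with (H (Hs s (Fc c))). f_equal. lia.
Qed.

Definition SInvH (B Y : config) : Prop :=
  exists w : nat, forall s : nat, exists a : Z, forall i,
    Hs s B i <> Hs s Y i -> a <= i < a + Z.of_nat w.

Lemma F_diff : forall c d a w,
  (forall i, c i <> d i -> a <= i < a + w) ->
  forall i, Fc c i <> Fc d i -> a - 1 <= i < a + w + 1.
Proof.
  intros c d a w Hd i Hi.
  destruct (Z_le_gt_dec (a-1) i); destruct (Z_lt_ge_dec i (a+w+1)); try lia;
  exfalso; apply Hi; unfold Fc, eca;
  (destruct (bool_dec (c (i-1)) (d (i-1))) as [e1|e1]; [|apply Hd in e1; lia]);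
  (destruct (bool_dec (c i) (d i)) as [e2|e2]; [|apply Hd in e2; lia]);
  (destruct (bool_dec (c (i+1)) (d (i+1))) as [e3|e3]; [|apply Hd in e3; lia]);
  rewrite e1, e2, e3; reflexivity.
Qed.

Lemma SInv_iff : forall u z,
  SInv 27 u z <-> SInvH (Fc (periodic u)) (Fc (patch u z)).
Proof.
  intros u z. split.
  - intros [w Hw]. exists w. intros s.
    destruct (Hw (2*s+1)%nat) as [a Ha].
    exists (a - Z.of_nat s). intros i Hi.
    specialize (Ha (i + Z.of_nat s)).
    change (eca 27) with Fc in Ha. rewrite !iter_odd in Ha.
    replace (i + Z.of_nat s - Z.of_nat s) with i in Ha by lia.
    specialize (Ha Hi). lia.
  - intros [w Hw]. exists (length z + w + 2)%nat. intros t.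
    change (eca 27) with Fc.
    destruct (Nat.Even_or_Odd t) as [[k Hk]|[k Hk]].
    + destruct k as [|s].
      * subst t. exists 0. intros i Hi. simpl in Hi.
        unfold patch in Hi.
        destruct ((0 <=? i) && (i <? Z.of_nat (length z))) eqn:E.
        -- apply andb_true_iff in E. destruct E as [E1 E2].
           apply Z.leb_le in E1. apply Z.ltb_lt in E2. lia.
        -- exfalso; apply Hi; reflexivity.
      * destruct (Hw s) as [a Ha].
        exists (a + Z.of_nat s - 1). intros i Hi.
        replace t with (S (2*s+1)) in Hi by lia.
        change (Nat.iter (S (2 * s + 1)) Fc (periodic u)) with (Fc (Nat.iter (2 * s + 1) Fc (periodic u))) in Hi.
        change (Nat.iter (S (2 * s + 1)) Fc (patch u z)) with (Fc (Nat.iter (2 * s + 1) Fc (patch u z))) in Hi.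
        assert (Hd : forall j, Nat.iter (2 * s + 1) Fc (periodic u) j <> Nat.iter (2 * s + 1) Fc (patch u z) j -> a + Z.of_nat s <= j < a + Z.of_nat s + Z.of_nat w).
        { intros j Hj. rewrite !iter_odd in Hj. apply Ha in Hj. lia. }
        apply (F_diff _ _ _ _ Hd) in Hi. lia.
    + subst t. destruct (Hw k) as [a Ha].
      exists (a + Z.of_nat k). intros i Hi.
      rewrite !iter_odd in Hi. apply Ha in Hi. lia.
Qed.


Ltac zlia := Z.div_mod_to_equations; lia.

Definition cls (r k : Z) : Prop := (k - r) mod 3 = 0.
Definition allact (B : config) (r : Z) : Prop := forall t, act B (r + 3*t) = true.

Inductive chain (y : config) : Z -> Z -> Prop :=
| ch_stop : forall i, act y i = false -> chain y i i
| ch_step : forall i e, act y i = true -> chain y (i+3) e -> chain y i e.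

Definition Ecls (B Y : config) (r : Z) : Prop :=
  forall e, cls r e -> act Y e = false ->
    (forall k, cls r k -> k < e -> act Y k = true) ->
    forall k, cls r k -> B k = Y e.
Definition Mcls (B Y : config) (r : Z) : Prop :=
  forall j, cls r j -> (forall k, cls r k -> k <= j -> act Y k = true) -> Y j = B j.
Definition Dinf (B Y : config) : Prop := forall i e, chain Y i e -> Y e = B i.
Definition Phi (B Y : config) : Prop :=
  forall r, 0 <= r < 3 -> allact B r -> Ecls B Y r /\ (Mcls B Y r \/ Dinf B Y).

Lemma walk : forall k s y i,
  (forall j, (j < k)%nat -> act y (i + 3 * Z.of_nat j) = true) ->
  Hs (s + k) y i = Hs s y (i + 3 * Z.of_nat k).
Proof.
  induction k; intros s y i Ha.
  - rewrite Nat.add_0_r. f_equal. lia.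
  - replace (s + S k)%nat with (S (s + k)) by lia.
    rewrite Hs_act by (specialize (Ha 0%nat); replace (i + 3 * Z.of_nat 0) with i in Ha by lia; apply Ha; lia).
    rewrite IHk.
    + f_equal. lia.
    + intros j Hj. specialize (Ha (S j)). replace (i + 3 + 3 * Z.of_nat j) with (i + 3 * Z.of_nat (S j)) by lia.
      apply Ha. lia.
Qed.

Lemma val_cases : forall s y i,
  (Hs s y i = y (i + 3 * Z.of_nat s) /\ forall j, (j < s)%nat -> act y (i + 3 * Z.of_nat j) = true) \/
  (exists j, (j < s)%nat /\ (forall j', (j' < j)%nat -> act y (i + 3 * Z.of_nat j') = true) /\
     act y (i + 3 * Z.of_nat j) = false /\ Hs s y i = y (i + 3 * Z.of_nat j)).
Proof.
  induction s; intros y i.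
  - left. split; [simpl; f_equal; lia | intros; lia].
  - destruct (act y i) eqn:E.
    + rewrite Hs_act by exact E.
      destruct (IHs y (i+3)) as [[H1 H2]|[j [H1 [H2 [H3 H4]]]]].
      * left. split.
        -- rewrite H1. f_equal. lia.
        -- intros j Hj. destruct j. { replace (i + 3 * Z.of_nat 0) with i by lia. exact E. }
           replace (i + 3 * Z.of_nat (S j)) with (i + 3 + 3 * Z.of_nat j) by lia. apply H2. lia.
      * right. exists (S j). split; [lia|]. split; [|split].
        -- intros j' Hj'. destruct j'. { replace (i + 3 * Z.of_nat 0) with i by lia. exact E. }
           replace (i + 3 * Z.of_nat (S j')) with (i + 3 + 3 * Z.of_nat j') by lia. apply H2. lia.
        -- replace (i + 3 * Z.of_nat (S j)) with (i + 3 + 3 * Z.of_nat j) by lia. exact H3.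
        -- rewrite H4. f_equal. lia.
    + right. exists 0%nat. split; [lia|]. split; [intros; lia|].
      replace (i + 3 * Z.of_nat 0) with i by lia. split; [exact E|].
      apply Hs_inact. exact E.
Qed.

Lemma same_vals : forall (Y B : config) s i,
  (forall j, (j <= s)%nat -> (forall j', (j' < j)%nat -> act Y (i + 3 * Z.of_nat j') = true) ->
     act Y (i + 3 * Z.of_nat j) = act B (i + 3 * Z.of_nat j) /\ Y (i + 3 * Z.of_nat j) = B (i + 3 * Z.of_nat j)) ->
  Hs s Y i = Hs s B i.
Proof.
  intros Y B s. induction s; intros i Hyp.
  - simpl. destruct (Hyp 0%nat ltac:(lia) ltac:(intros; lia)) as [_ E].
    replace (i + 3 * Z.of_nat 0) with i in E by lia. exact E.
  - destruct (Hyp 0%nat ltac:(lia) ltac:(intros; lia)) as [Ea Ev].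
    replace (i + 3 * Z.of_nat 0) with i in Ea, Ev by lia.
    destruct (act Y i) eqn:E.
    + rewrite !Hs_act by congruence. apply IHs.
      intros j Hj Hpre. specialize (Hyp (S j) ltac:(lia)).
      replace (i + 3 * Z.of_nat (S j)) with (i + 3 + 3 * Z.of_nat j) in Hyp by lia.
      apply Hyp. intros j' Hj'. destruct j'. { replace (i + 3 * Z.of_nat 0) with i by lia. exact E. }
      replace (i + 3 * Z.of_nat (S j')) with (i + 3 + 3 * Z.of_nat j') by lia. apply Hpre. lia.
    + rewrite !Hs_inact by congruence. exact Ev.
Qed.

Lemma chain_inv : forall y i e, chain y i e ->
  exists j : nat, e = i + 3 * Z.of_nat j /\
    (forall j', (j' < j)%nat -> act y (i + 3 * Z.of_nat j') = true) /\ act y e = false.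
Proof.
  intros y i e Hc. induction Hc as [i Hi|i e Hi Hc IH].
  - exists 0%nat. split; [lia|]. split; [intros; lia|exact Hi].
  - destruct IH as [j [E1 [E2 E3]]]. exists (S j). split; [lia|]. split; [|exact E3].
    intros j' Hj'. destruct j'. { replace (i + 3 * Z.of_nat 0) with i by lia. exact Hi. }
    replace (i + 3 * Z.of_nat (S j')) with (i + 3 + 3 * Z.of_nat j') by lia. apply E2. lia.
Qed.

Lemma chain_mk : forall y j i,
  (forall j', (j' < j)%nat -> act y (i + 3 * Z.of_nat j') = true) ->
  act y (i + 3 * Z.of_nat j) = false -> chain y i (i + 3 * Z.of_nat j).
Proof.
  intros y j. induction j; intros i H1 H2.
  - replace (i + 3 * Z.of_nat 0) with i in * by lia. constructor. exact H2.
  - apply ch_step.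
    + specialize (H1 0%nat). replace (i + 3 * Z.of_nat 0) with i in H1 by lia. apply H1. lia.
    + replace (i + 3 * Z.of_nat (S j)) with (i + 3 + 3 * Z.of_nat j) by lia.
      apply IHj.
      * intros j' Hj'. replace (i + 3 + 3 * Z.of_nat j') with (i + 3 * Z.of_nat (S j')) by lia. apply H1. lia.
      * replace (i + 3 + 3 * Z.of_nat j) with (i + 3 * Z.of_nat (S j)) by lia. exact H2.
Qed.

Lemma cls_step : forall r i k, cls r i -> cls r k -> i <= k ->
  exists j : nat, k = i + 3 * Z.of_nat j.
Proof.
  unfold cls. intros r i k H1 H2 H3. exists (Z.to_nat ((k - i)/3)).
  rewrite Z2Nat.id. zlia. apply Z.div_pos; lia.
Qed.

Lemma cls_add : forall r i j, cls r i -> cls r (i + 3 * j).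
Proof. unfold cls. intros. zlia. Qed.

Lemma cls_sub : forall r i j, cls r i -> cls r (i - 3 * j).
Proof. unfold cls. intros. zlia. Qed.

Lemma cls_r : forall r t, cls r (r + 3 * t).
Proof. unfold cls. intros. zlia. Qed.

Lemma cls_eq : forall r i k, cls r i -> cls r k -> cls i k.
Proof. unfold cls. intros. zlia. Qed.

Lemma first_inactive : forall y r K e, cls r e -> act y e = false ->
  (forall k, cls r k -> k < K -> act y k = true) ->
  exists e', cls r e' /\ act y e' = false /\ forall k, cls r k -> k < e' -> act y k = true.
Proof.
  intros y r K e He Hae Hfar. apply NNPP. intro Hno.
  assert (Hall : forall n : nat, forall k, cls r k -> k < K + Z.of_nat n -> act y k = true).
  { induction n; intros k Hk Hlt.
    - apply Hfar; auto; lia.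
    - destruct (Z_lt_ge_dec k (K + Z.of_nat n)) as [Hl|Hg]; [apply IHn; auto|].
      destruct (act y k) eqn:Ek; [reflexivity|].
      exfalso. apply Hno. exists k. split; [exact Hk|]. split; [exact Ek|].
      intros k' Hk' Hlt'. apply IHn; auto. lia. }
  specialize (Hall (Z.to_nat (e - K + 1)) e He).
  destruct (Z_lt_ge_dec e K).
  - rewrite Hfar in Hae by auto. discriminate.
  - rewrite Hall in Hae by lia. discriminate.
Qed.



Definition setting (B Y : config) (m L R : Z) : Prop :=
  0 < m /\ (forall k t, B (k + m * t) = B k) /\ (forall j, (j < L \/ R < j) -> Y j = B j).

Lemma act_per : forall B Y m L R, setting B Y m L R -> forall k t, act B (k + m * t) = act B k.
Proof.
  intros B Y m L R [Hm [Hp Hw]] k t. unfold act.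
  replace (k + m * t - 1) with (k - 1 + m * t) by lia.
  replace (k + m * t + 1) with (k + 1 + m * t) by lia.
  replace (k + m * t + 2) with (k + 2 + m * t) by lia.
  rewrite !Hp. reflexivity.
Qed.

Lemma act_agree : forall B Y m L R, setting B Y m L R ->
  forall k, (k + 2 < L \/ R < k - 1) -> act Y k = act B k.
Proof.
  intros B Y m L R [Hm [Hp Hw]] k Hk. unfold act.
  rewrite !Hw by lia. reflexivity.
Qed.

Lemma allact_cls : forall B r k, allact B r -> cls r k -> act B k = true.
Proof.
  intros B r k Ha Hc. unfold cls in Hc.
  replace k with (r + 3 * ((k - r) / 3)) by zlia. apply Ha.
Qed.

Lemma allact_ncls : forall B r k, allact B r -> ~ cls r k -> act B k = false.
Proof.
  intros B r k Ha Hc. unfold cls in Hc.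
  assert (Hm : (k - r) mod 3 = 1 \/ (k - r) mod 3 = 2) by zlia.
  destruct Hm as [Hm|Hm].
  - assert (E : act B (k - 1) = true).
    { replace (k - 1) with (r + 3 * ((k - r) / 3)) by zlia. apply Ha. }
    unfold act in *.
    repeat match goal with |- context [B ?e] => progress (ring_simplify e) end.
    repeat match goal with H : context [B ?e] |- _ => progress (ring_simplify e in H) end.
    destruct (B (k-2)), (B (k-1)), (B k), (B (k+1)), (B (k+2)), (B (k+3)); simpl in *; congruence.
  - assert (E : act B (k + 1) = true).
    { replace (k + 1) with (r + 3 * ((k - r) / 3 + 1)) by zlia. apply Ha. }
    unfold act in *.
    repeat match goal with |- context [B ?e] => progress (ring_simplify e) end.
    repeat match goal with H : context [B ?e] |- _ => progress (ring_simplify e in H) end.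
    destruct (B (k-2)), (B (k-1)), (B k), (B (k+1)), (B (k+2)), (B (k+3)); simpl in *; congruence.
Qed.

Lemma Hs_B_cls : forall B r i s, allact B r -> cls r i -> Hs s B i = B (i + 3 * Z.of_nat s).
Proof.
  intros B r i s Ha Hc.
  replace s with (0 + s)%nat at 1 by lia. rewrite walk; [reflexivity|].
  intros j Hj. apply (allact_cls B r). exact Ha. apply cls_add. exact Hc.
Qed.

Lemma Hs_B_ncls : forall B r i s, allact B r -> ~ cls r i -> Hs s B i = B i.
Proof. intros. apply Hs_inact. eapply allact_ncls; eauto. Qed.

Lemma right_clean : forall B Y m L R, setting B Y m L R ->
  forall s i, R + 1 < i -> Hs s Y i = Hs s B i.
Proof.
  intros B Y m L R HS s i Hi. apply same_vals. intros j _ _. split.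
  - eapply act_agree; eauto. lia.
  - destruct HS as [_ [_ Hw]]. apply Hw. lia.
Qed.

Lemma far_left_cls_act : forall B Y m L R r, setting B Y m L R -> allact B r ->
  forall k, cls r k -> k < L - 2 -> act Y k = true.
Proof.
  intros. rewrite (act_agree B Y m L R) by (auto; lia). eapply allact_cls; eauto.
Qed.

Lemma before_act : forall B Y m L R r, setting B Y m L R -> allact B r ->
  forall i j, cls r i -> i < L - 3 ->
  (forall j', (j' < j)%nat -> act Y (i + 3 * Z.of_nat j') = true) ->
  forall k, cls r k -> k < i + 3 * Z.of_nat j -> act Y k = true.
Proof.
  intros B Y m L R r HS Ha i j Hci Hi Hacts k Hk Hlt.
  destruct (Z_lt_ge_dec k i).
  - eapply far_left_cls_act; eauto. lia.
  - destruct (cls_step r i k Hci Hk ltac:(lia)) as [j' Ej']. subst k. apply Hacts. lia.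
Qed.

Lemma caseI_chain : forall B Y m L R, setting B Y m L R ->
  (forall r, 0 <= r < 3 -> ~ allact B r) ->
  forall k, exists j, (j <= Z.to_nat m)%nat /\ act B (k + 3 * Z.of_nat j) = false.
Proof.
  intros B Y m L R HS Hno k. pose proof HS as [Hm _].
  apply NNPP. intro Hc.
  assert (Hall : forall j, (j <= Z.to_nat m)%nat -> act B (k + 3 * Z.of_nat j) = true).
  { intros j Hj. destruct (act B (k + 3 * Z.of_nat j)) eqn:E; [reflexivity|].
    exfalso. apply Hc. exists j. auto. }
  apply (Hno (k mod 3)). zlia. intro t.
  set (T := (k mod 3 + 3 * t - k) / 3).
  assert (E1 : k mod 3 + 3 * t = k + 3 * (T mod m) + m * (3 * (T / m))).
  { unfold T. zlia. }
  rewrite E1. rewrite (act_per B Y m L R HS).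
  replace (T mod m) with (Z.of_nat (Z.to_nat (T mod m))).
  - apply Hall. assert (0 <= T mod m < m) by (apply Z.mod_pos_bound; lia). lia.
  - rewrite Z2Nat.id. reflexivity. apply Z.mod_pos_bound; lia.
Qed.



Lemma right_bound : forall B Y m L R, setting B Y m L R ->
  forall s i, Hs s B i <> Hs s Y i -> i <= R + 1.
Proof.
  intros B Y m L R HS s i Hi. destruct (Z_le_gt_dec i (R+1)); [assumption|].
  exfalso. apply Hi. symmetry. eapply right_clean; eauto. lia.
Qed.

Lemma charH_bwd : forall B Y m L R, setting B Y m L R -> L <= R -> Phi B Y -> SInvH B Y.
Proof.
  intros B Y m L R HS HLR HPhi. pose proof HS as [Hm [Hp Hw]].
  destruct (classic (exists r, 0 <= r < 3 /\ allact B r)) as [[r [Hr Hall]]|Hno].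
  - destruct (HPhi r Hr Hall) as [HE [HM|HD]].
    + exists (Z.to_nat (R - L + 5)). intro s. exists (L - 3). intros i Hi.
      pose proof (right_bound B Y m L R HS s i Hi).
      destruct (Z_lt_ge_dec i (L - 3)); [|lia]. exfalso. apply Hi.
      destruct (classic (cls r i)) as [Hc|Hc].
      * rewrite (Hs_B_cls B r i s Hall Hc).
        destruct (val_cases s Y i) as [[HY Hacts]|[j [Hj [Hacts [Hina HY]]]]].
        -- rewrite HY. destruct (act Y (i + 3 * Z.of_nat s)) eqn:Ea.
           ++ symmetry. apply HM. apply cls_add; auto.
              intros k Hk Hle. destruct (Z.eq_dec k (i + 3 * Z.of_nat s)); [subst; auto|].
              eapply (before_act B Y m L R r HS Hall i s Hc); eauto. lia.
           ++ apply (HE (i + 3 * Z.of_nat s)); auto. apply cls_add; auto.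
              eapply (before_act B Y m L R r HS Hall i s Hc); eauto.
              apply cls_add; auto.
        -- rewrite HY. apply (HE (i + 3 * Z.of_nat j)); auto. apply cls_add; auto.
           eapply (before_act B Y m L R r HS Hall i j Hc); eauto.
           apply cls_add; auto.
      * rewrite (Hs_B_ncls B r i s Hall Hc).
        rewrite Hs_inact.
        -- symmetry. apply Hw. lia.
        -- rewrite (act_agree B Y m L R HS) by lia. eapply allact_ncls; eauto.
    + exists (Z.to_nat (R - L + 7)). intro s. exists (L - 3 * Z.of_nat s - 2). intros i Hi.
      pose proof (right_bound B Y m L R HS s i Hi).
      destruct (val_cases s Y i) as [[HY Hacts]|[j [Hj [Hacts [Hina HY]]]]].
      * destruct (classic (cls r i)) as [Hc|Hc].
        -- rewrite (Hs_B_cls B r i s Hall Hc), HY in Hi.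
           destruct (Z_lt_ge_dec (i + 3 * Z.of_nat s) L); [exfalso; apply Hi; symmetry; apply Hw; lia|].
           destruct (Z_le_gt_dec (i + 3 * Z.of_nat s) R); [|exfalso; apply Hi; symmetry; apply Hw; lia].
           lia.
        -- rewrite (Hs_B_ncls B r i s Hall Hc), HY in Hi.
           destruct s as [|s'].
           ++ destruct (Z_lt_ge_dec i L); [exfalso; apply Hi; symmetry; replace (i + 3 * Z.of_nat 0) with i by lia; apply Hw; lia|].
              destruct (Z_le_gt_dec i R); [|exfalso; apply Hi; symmetry; replace (i + 3 * Z.of_nat 0) with i by lia; apply Hw; lia].
              lia.
           ++ assert (A1 := Hacts 0%nat ltac:(lia)). assert (A2 := Hacts s' ltac:(lia)).
              replace (i + 3 * Z.of_nat 0) with i in A1 by lia.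
              assert (N1 : ~ (i + 2 < L \/ R < i - 1)).
              { intro C. rewrite (act_agree B Y m L R HS i C) in A1.
                rewrite (allact_ncls B r i Hall Hc) in A1. discriminate. }
              assert (Hc2 : ~ cls r (i + 3 * Z.of_nat s')).
              { intro C. apply Hc. unfold cls in *. zlia. }
              assert (N2 : ~ (i + 3 * Z.of_nat s' + 2 < L \/ R < i + 3 * Z.of_nat s' - 1)).
              { intro C. rewrite (act_agree B Y m L R HS _ C) in A2.
                rewrite (allact_ncls B r _ Hall Hc2) in A2. discriminate. }
              lia.
      * exfalso. apply Hi. rewrite HY.
        assert (Hch : chain Y i (i + 3 * Z.of_nat j)) by (apply chain_mk; auto).
        rewrite (HD _ _ Hch).
        destruct (classic (cls r i)) as [Hc|Hc].
        -- rewrite (Hs_B_cls B r i s Hall Hc).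
           destruct (first_inactive Y r (L - 2) (i + 3 * Z.of_nat j)) as [e' [He1 [He2 He3]]].
           ++ apply cls_add; auto.
           ++ exact Hina.
           ++ intros k Hk Hlt. eapply far_left_cls_act; eauto.
           ++ rewrite (HE e' He1 He2 He3 i Hc). apply (HE e' He1 He2 He3). apply cls_add; auto.
        -- rewrite (Hs_B_ncls B r i s Hall Hc). reflexivity.
  - exists (Z.to_nat (R - L + 3 * m + 5)). intro s. exists (L - 3 * m - 3). intros i Hi.
    pose proof (right_bound B Y m L R HS s i Hi).
    destruct (Z_lt_ge_dec i (L - 3 * m - 3)); [|lia]. exfalso. apply Hi. symmetry.
    assert (Hno' : forall r, 0 <= r < 3 -> ~ allact B r) by (intros r Hr Ha; apply Hno; eauto).
    destruct (caseI_chain B Y m L R HS Hno' i) as [j0 [Hj0 Hina]].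
    apply same_vals. intros j Hj Hpre.
    destruct (le_lt_dec j j0) as [Hle|Hlt].
    + split.
      * apply (act_agree B Y m L R HS). lia.
      * apply Hw. lia.
    + exfalso. specialize (Hpre j0 Hlt).
      rewrite (act_agree B Y m L R HS) in Hpre by lia. congruence.
Qed.

Lemma charH_fwd : forall B Y m L R, setting B Y m L R -> SInvH B Y -> Phi B Y.
Proof.
  intros B Y m L R HS [w Hw] r Hr Hall. pose proof HS as [Hm [Hp Hwin]].
  assert (HE : Ecls B Y r).
  { intros e He Hae Hbef k Hk. apply NNPP; intro Hne.
    set (T := (k - e) / 3).
    set (d := Z.to_nat (T mod m)).
    assert (Hd0 : 0 <= T mod m < m) by (apply Z.mod_pos_bound; lia).
    assert (Ed : Z.of_nat d = T mod m) by (unfold d; rewrite Z2Nat.id; lia).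
    assert (EBk : B (e + 3 * Z.of_nat d) = B k).
    { rewrite <- (Hp (e + 3 * Z.of_nat d) (3 * (T / m))). f_equal. rewrite Ed. unfold T. unfold cls in *. zlia. }
    set (s := (d + Z.to_nat m * w)%nat).
    destruct (Hw s) as [a Ha].
    assert (D1 : Hs s B e <> Hs s Y e).
    { rewrite (Hs_B_cls B r e s Hall He), Hs_inact by exact Hae.
      replace (e + 3 * Z.of_nat s) with (e + 3 * Z.of_nat d + m * (3 * Z.of_nat w)).
      - rewrite Hp, EBk. intro C. apply Hne. exact C.
      - unfold s. rewrite Nat2Z.inj_add, Nat2Z.inj_mul, Z2Nat.id by lia. lia. }
    set (p := e - 3 * (m * Z.of_nat w)).
    assert (D2 : Hs s B p <> Hs s Y p).
    { rewrite (Hs_B_cls B r p s Hall) by (unfold p; apply cls_sub; auto).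
      unfold s at 2. rewrite walk.
      - replace (p + 3 * Z.of_nat (Z.to_nat m * w)) with e.
        + rewrite Hs_inact by exact Hae.
          replace (p + 3 * Z.of_nat s) with (e + 3 * Z.of_nat d).
          * rewrite EBk. intro C. apply Hne. exact C.
          * unfold p, s. rewrite Nat2Z.inj_add, Nat2Z.inj_mul, Z2Nat.id by lia. lia.
        + unfold p. rewrite Nat2Z.inj_mul, Z2Nat.id by lia. lia.
      - intros j Hj. apply Hbef.
        + unfold p. apply cls_add. apply cls_sub. auto.
        + unfold p. assert (Z.of_nat j < m * Z.of_nat w).
          { assert (Hjj : Z.of_nat j < Z.of_nat (Z.to_nat m * w)) by lia.
            rewrite Nat2Z.inj_mul, Z2Nat.id in Hjj by lia. lia. }
          lia. }
    apply Ha in D1. apply Ha in D2. unfold p in D2. nia. }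
  split; [exact HE|].
  apply NNPP. intro Hn. apply not_or_and in Hn. destruct Hn as [HnM HnD].
  unfold Mcls in HnM. apply not_all_ex_not in HnM. destruct HnM as [j0 HnM].
  apply imply_to_and in HnM. destruct HnM as [Hc0 HnM].
  apply imply_to_and in HnM. destruct HnM as [Hbef0 Hne0].
  unfold Dinf in HnD. apply not_all_ex_not in HnD. destruct HnD as [i0 HnD].
  apply not_all_ex_not in HnD. destruct HnD as [e0 HnD].
  apply imply_to_and in HnD. destruct HnD as [Hch Hne1].
  destruct (chain_inv Y i0 e0 Hch) as [J [EJ [HJ1 HJ2]]].
  set (s := (J + Z.to_nat (Z.abs (i0 - j0)) + w)%nat).
  destruct (Hw s) as [a Ha].
  assert (D1 : Hs s B i0 <> Hs s Y i0).
  { replace s with ((Z.to_nat (Z.abs (i0 - j0)) + w) + J)%nat at 2 by (unfold s; lia).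
    rewrite walk by exact HJ1. rewrite <- EJ. rewrite (Hs_inact _ Y e0 HJ2).
    destruct (classic (cls r i0)) as [Hc|Hc].
    - rewrite (Hs_B_cls B r i0 s Hall Hc).
      destruct (first_inactive Y r (L - 2) e0) as [e' [He1 [He2 He3]]].
      + rewrite EJ. apply cls_add; auto.
      + exact HJ2.
      + intros k Hk Hlt. eapply far_left_cls_act; eauto.
      + rewrite (HE e' He1 He2 He3 (i0 + 3 * Z.of_nat s)) by (apply cls_add; auto).
        rewrite <- (HE e' He1 He2 He3 i0 Hc). intro C. apply Hne1. symmetry. exact C.
    - rewrite (Hs_B_ncls B r i0 s Hall Hc). intro C. apply Hne1. symmetry. exact C. }
  set (p := j0 - 3 * Z.of_nat s).
  assert (D2 : Hs s B p <> Hs s Y p).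
  { rewrite (Hs_B_cls B r p s Hall) by (unfold p; apply cls_sub; auto).
    replace s with (0 + s)%nat at 2 by lia. rewrite walk.
    - replace (p + 3 * Z.of_nat s) with j0 by (unfold p; lia). change (Hs 0 Y j0) with (Y j0).
      intro C. apply Hne0. symmetry. exact C.
    - intros j Hj. apply Hbef0.
      + unfold p. apply cls_add, cls_sub. auto.
      + unfold p. lia. }
  apply Ha in D1. apply Ha in D2. unfold p, s in D2.
  rewrite !Nat2Z.inj_add, Z2Nat.id in D2 by lia. lia.
Qed.



Definition L1 (Q : Z) (Y : config) (r : Z) : Prop :=
  forall k, cls r k -> k < Q -> act Y k = true.
Definition L2 (Q : Z) (B Y : config) (r : Z) : Prop :=
  forall e, cls r e -> e < Q -> act Y e = false ->
    (forall k, cls r k -> k < e -> act Y k = true) -> forall k, cls r k -> B k = Y e.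
Definition ML (Q : Z) (B Y : config) (r : Z) : Prop :=
  forall j, cls r j -> j < Q -> (forall k, cls r k -> k <= j -> act Y k = true) -> Y j = B j.
Definition DL (Q : Z) (B Y : config) : Prop :=
  forall i e, chain Y i e -> e < Q -> Y e = B i.
Definition path (Y : config) (i c : Z) : Prop :=
  exists j : nat, c = i + 3 * Z.of_nat j /\ forall j', (j' < j)%nat -> act Y (i + 3 * Z.of_nat j') = true.
Definition PP (Q : Z) (B Y : config) (c : Z) (b : bool) : Prop :=
  exists i, i < Q /\ path Y i c /\ B i = b.

Definition SumEq (Q : Z) (B Y1 Y2 : config) : Prop :=
  (forall r, 0 <= r < 3 -> (L1 Q Y1 r <-> L1 Q Y2 r) /\ (L2 Q B Y1 r <-> L2 Q B Y2 r) /\ (ML Q B Y1 r <-> ML Q B Y2 r)) /\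
  (DL Q B Y1 <-> DL Q B Y2) /\
  (forall c b, Q <= c <= Q + 2 -> (PP Q B Y1 c b <-> PP Q B Y2 c b)).

Lemma chain_ge : forall y i e, chain y i e -> i <= e.
Proof. intros y i e H. induction H; lia. Qed.

Lemma chain_right : forall Y1 Y2 i0, (forall k, i0 <= k -> act Y1 k = act Y2 k) ->
  forall i e, chain Y2 i e -> i0 <= i -> chain Y1 i e.
Proof.
  intros Y1 Y2 i0 Ha i e H. induction H as [i Hi|i e Hi Hc IH]; intros Hle.
  - constructor. rewrite Ha by lia. exact Hi.
  - apply ch_step. rewrite Ha by lia. exact Hi. apply IH. lia.
Qed.

Lemma chain_split : forall y Q i e, chain y i e -> i < Q -> Q <= e ->
  exists c, Q <= c <= Q + 2 /\ path y i c /\ chain y c e.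
Proof.
  intros y Q i e H. induction H as [i Hi|i e Hi Hc IH]; intros H1 H2.
  - lia.
  - destruct (Z_lt_ge_dec (i + 3) Q) as [Hl|Hg].
    + destruct (IH Hl H2) as [c [Hc1 [[j [Ej Hj]] Hc3]]].
      exists c. split; [lia|]. split; [|exact Hc3].
      exists (S j). split; [lia|]. intros j' Hj'. destruct j'.
      * replace (i + 3 * Z.of_nat 0) with i by lia. exact Hi.
      * replace (i + 3 * Z.of_nat (S j')) with (i + 3 + 3 * Z.of_nat j') by lia. apply Hj. lia.
    + exists (i + 3). split; [lia|]. split; [|exact Hc].
      exists 1%nat. split; [lia|]. intros j' Hj'. replace j' with 0%nat by lia.
      replace (i + 3 * Z.of_nat 0) with i by lia. exact Hi.
Qed.

Lemma path_chain : forall y i c e, path y i c -> chain y c e -> chain y i e.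
Proof.
  intros y i c e [j [Ej Hj]]. revert i Ej Hj. induction j; intros i Ej Hj Hc.
  - replace i with c by lia. exact Hc.
  - apply ch_step.
    + specialize (Hj 0%nat). replace (i + 3 * Z.of_nat 0) with i in Hj by lia. apply Hj. lia.
    + apply (IHj (i+3)); [lia| |exact Hc].
      intros j' Hj'. replace (i + 3 + 3 * Z.of_nat j') with (i + 3 * Z.of_nat (S j')) by lia.
      apply Hj. lia.
Qed.

Lemma Phi_transfer : forall Q B Y1 Y2, SumEq Q B Y1 Y2 ->
  (forall j, Q - 1 <= j -> Y1 j = Y2 j) -> Phi B Y1 -> Phi B Y2.
Proof.
  intros Q B Y1 Y2 [HS1 [HS2 HS3]] Hagr HPhi r Hr Hall.
  assert (Hact : forall k, Q <= k -> act Y1 k = act Y2 k).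
  { intros k Hk. unfold act. rewrite !Hagr by lia. reflexivity. }
  destruct (HS1 r Hr) as [EL1 [EL2 EML]].
  destruct (HPhi r Hr Hall) as [HE HMD].
  assert (HE2 : Ecls B Y2 r).
  { intros e He Hae Hbef k Hk.
    destruct (Z_lt_ge_dec e Q).
    * apply EL2; auto. intros e' He' Hlt Hae' Hbef' k' Hk'. apply HE; auto.
    * assert (HL1 : L1 Q Y1 r). { apply EL1. intros k' Hk' Hlt. apply Hbef; auto; lia. }
      rewrite <- Hagr by lia. apply HE; auto.
      -- rewrite Hact by lia. exact Hae.
      -- intros k' Hk' Hlt. destruct (Z_lt_ge_dec k' Q). apply HL1; auto.
         rewrite Hact by lia. apply Hbef; auto. }
  split; [exact HE2|].
  destruct HMD as [HM|HD].
  - left. intros j Hj Hbef.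
    destruct (Z_lt_ge_dec j Q).
    + apply EML; auto. intros j' Hj' Hlt Hbef'. apply HM; auto.
    + assert (HL1 : L1 Q Y1 r). { apply EL1. intros k' Hk' Hlt. apply Hbef; auto; lia. }
      rewrite <- Hagr by lia. apply HM; auto.
      intros k' Hk' Hle. destruct (Z_lt_ge_dec k' Q). apply HL1; auto.
      rewrite Hact by lia. apply Hbef; auto.
  - right. intros i e Hch.
    destruct (Z_lt_ge_dec e Q) as [Hel|Heg].
    + apply HS2; auto. intros i' e' Hch' Hlt. apply HD; auto.
    + destruct (Z_lt_ge_dec i Q) as [Hil|Hig].
      * destruct (chain_split Y2 Q i e Hch Hil ltac:(lia)) as [c [Hc1 [Hpath Hce]]].
        assert (HP2 : PP Q B Y2 c (B i)) by (exists i; auto).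
        apply (HS3 c (B i) Hc1) in HP2. destruct HP2 as [i' [Hi'1 [Hpath' Hbi']]].
        assert (Hce1 : chain Y1 c e) by (apply (chain_right Y1 Y2 Q); auto; lia).
        rewrite <- Hagr by lia. rewrite <- Hbi'. apply HD. eapply path_chain; eauto.
      * assert (Hch1 : chain Y1 i e) by (apply (chain_right Y1 Y2 Q); auto; lia).
        rewrite <- Hagr by lia. apply HD; auto.
Qed.



Lemma chain_left : forall Y1 Y2 Q, (forall k, k <= Q -> act Y1 k = act Y2 k) ->
  forall i e, chain Y1 i e -> e <= Q -> chain Y2 i e.
Proof.
  intros Y1 Y2 Q Ha i e H. induction H as [i Hi|i e Hi Hc IH]; intros Hle.
  - constructor. rewrite <- Ha by lia. exact Hi.
  - apply ch_step. rewrite <- Ha. exact Hi. pose proof (chain_ge _ _ _ Hc). lia. apply IH. lia.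
Qed.

Lemma left_imp : forall Q B Y1 Y2, (forall j, j <= Q + 2 -> Y1 j = Y2 j) ->
  (forall r, (L1 Q Y1 r -> L1 Q Y2 r) /\ (L2 Q B Y1 r -> L2 Q B Y2 r) /\ (ML Q B Y1 r -> ML Q B Y2 r)) /\
  (DL Q B Y1 -> DL Q B Y2) /\
  (forall c b, c <= Q + 2 -> PP Q B Y1 c b -> PP Q B Y2 c b).
Proof.
  intros Q B Y1 Y2 Hagr.
  assert (Hact : forall k, k <= Q -> act Y1 k = act Y2 k).
  { intros k Hk. unfold act. rewrite !Hagr by lia. reflexivity. }
  split; [|split].
  - intro r. split; [|split].
    + intros H k Hk Hlt. rewrite <- Hact by lia. apply H; auto.
    + intros H e He Hlt Hae Hbef k Hk. rewrite <- Hagr by lia. apply H; auto.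
      * rewrite Hact by lia. exact Hae.
      * intros k' Hk' Hlt'. rewrite Hact by lia. apply Hbef; auto.
    + intros H j Hj Hlt Hbef. rewrite <- Hagr by lia. apply H; auto.
      intros k' Hk' Hle. rewrite Hact by lia. apply Hbef; auto.
  - intros H i e Hch Hlt. rewrite <- Hagr by lia. apply H; auto.
    apply (chain_left Y2 Y1 Q); auto. intros k Hk. symmetry. apply Hact. exact Hk. lia.
  - intros c b Hc [i [Hi [[j [Ej Hj]] Hb]]]. exists i. split; [exact Hi|]. split; [|exact Hb].
    exists j. split; [exact Ej|]. intros j' Hj'. rewrite <- Hact by lia. apply Hj. exact Hj'.
Qed.

Lemma left_sumeq : forall Q B Y1 Y2, (forall j, j <= Q + 2 -> Y1 j = Y2 j) -> SumEq Q B Y1 Y2.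
Proof.
  intros Q B Y1 Y2 Hagr.
  assert (Hagr' : forall j, j <= Q + 2 -> Y2 j = Y1 j) by (intros; symmetry; auto).
  destruct (left_imp Q B Y1 Y2 Hagr) as [A1 [A2 A3]].
  destruct (left_imp Q B Y2 Y1 Hagr') as [B1 [B2 B3]].
  split; [|split].
  - intros r _. destruct (A1 r) as [a1 [a2 a3]]. destruct (B1 r) as [b1 [b2 b3]]. tauto.
  - tauto.
  - intros c b Hc. split; [apply A3|apply B3]; lia.
Qed.

Lemma SumEq_sym : forall Q B Y1 Y2, SumEq Q B Y1 Y2 -> SumEq Q B Y2 Y1.
Proof.
  intros Q B Y1 Y2 [A1 [A2 A3]]. split; [|split].
  - intros r Hr. destruct (A1 r Hr) as [a1 [a2 a3]]. tauto.
  - tauto.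
  - intros c b Hc. specialize (A3 c b Hc). tauto.
Qed.

Lemma SumEq_trans : forall Q B Y1 Y2 Y3, SumEq Q B Y1 Y2 -> SumEq Q B Y2 Y3 -> SumEq Q B Y1 Y3.
Proof.
  intros Q B Y1 Y2 Y3 [A1 [A2 A3]] [C1 [C2 C3]]. split; [|split].
  - intros r Hr. destruct (A1 r Hr) as [a1 [a2 a3]]. destruct (C1 r Hr) as [c1 [c2 c3]]. tauto.
  - tauto.
  - intros c b Hc. specialize (A3 c b Hc). specialize (C3 c b Hc). tauto.
Qed.


Definition dec (P : Prop) : bool := if excluded_middle_informative P then true else false.

Lemma dec_iff : forall P P', dec P = dec P' -> (P <-> P').
Proof.
  intros P P'. unfold dec.
  destruct (excluded_middle_informative P), (excluded_middle_informative P'); intro E; try discriminate; tauto.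
Qed.

Definition sumBits (Q : Z) (B Y : config) : list bool :=
  [dec (L1 Q Y 0); dec (L1 Q Y 1); dec (L1 Q Y 2);
   dec (L2 Q B Y 0); dec (L2 Q B Y 1); dec (L2 Q B Y 2);
   dec (ML Q B Y 0); dec (ML Q B Y 1); dec (ML Q B Y 2);
   dec (DL Q B Y);
   dec (PP Q B Y Q false); dec (PP Q B Y Q true);
   dec (PP Q B Y (Q+1) false); dec (PP Q B Y (Q+1) true);
   dec (PP Q B Y (Q+2) false); dec (PP Q B Y (Q+2) true)].

Lemma sumBits_len : forall Q B Y, length (sumBits Q B Y) = 16%nat.
Proof. reflexivity. Qed.

Lemma sumBits_eq : forall Q B Y1 Y2, sumBits Q B Y1 = sumBits Q B Y2 -> SumEq Q B Y1 Y2.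
Proof.
  intros Q B Y1 Y2 E. unfold sumBits in E.
  injection E; intros.
  repeat match goal with H : dec _ = dec _ |- _ => apply dec_iff in H end.
  split; [|split].
  - intros r Hr. assert (r = 0 \/ r = 1 \/ r = 2) as [Er|[Er|Er]] by lia; subst r; tauto.
  - tauto.
  - intros c b Hc. assert (c = Q \/ c = Q + 1 \/ c = Q + 2) as [Ec|[Ec|Ec]] by lia; subst c;
    destruct b; tauto.
Qed.

Fixpoint build {X Y : Type} (fs : list (X -> bool)) (g : list bool -> Y -> bool) : protocol X Y :=
  match fs with
  | [] => BobNode (g []) (Leaf false) (Leaf true)
  | f :: fs' => AliceNode f (build fs' (fun l => g (false :: l))) (build fs' (fun l => g (true :: l)))
  end.

Lemma eval_build : forall (X Y : Type) (fs : list (X -> bool)) (g : list bool -> Y -> bool) (x : X) (y : Y),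
  eval (build fs g) x y = g (map (fun f => f x) fs) y.
Proof.
  intros X Y fs. induction fs as [|f fs IH]; intros g x y; simpl.
  - destruct (g [] y); reflexivity.
  - destruct (f x); rewrite IH; reflexivity.
Qed.

Lemma depth_build : forall (X Y : Type) (fs : list (X -> bool)) (g : list bool -> Y -> bool), depth (build fs g) = S (length fs).
Proof.
  intros X Y fs. induction fs as [|f fs IH]; intros g; simpl; [reflexivity|].
  rewrite !IH. rewrite Nat.max_id. reflexivity.
Qed.

Lemma nth_map_seq : forall (f : nat -> bool) n k, (k < n)%nat -> nth k (map f (seq 0 n)) false = f k.
Proof.
  intros f n k Hk. rewrite nth_indep with (d' := f 0%nat) by (rewrite length_map, length_seq; exact Hk).
  rewrite map_nth, seq_nth by exact Hk. reflexivity.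
Qed.

Lemma periodic_add : forall u, u <> [] -> forall k t,
  periodic u (k + Z.of_nat (length u) * t) = periodic u k.
Proof.
  intros u Hu k t. unfold periodic.
  assert (Hl : Z.of_nat (length u) <> 0) by (destruct u; [congruence|simpl; lia]).
  rewrite (Z.mul_comm _ t), Z.mod_add by exact Hl. reflexivity.
Qed.

Lemma patch_out : forall u z k, (k < 0 \/ Z.of_nat (length z) <= k) -> patch u z k = periodic u k.
Proof.
  intros u z k Hk. unfold patch.
  destruct (0 <=? k) eqn:E1; destruct (k <? Z.of_nat (length z)) eqn:E2; simpl; try reflexivity.
  apply Z.leb_le in E1. apply Z.ltb_lt in E2. lia.
Qed.

Lemma Fc_agree : forall c d j, c (j-1) = d (j-1) -> c j = d j -> c (j+1) = d (j+1) -> Fc c j = Fc d j.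
Proof. intros c d j H1 H2 H3. unfold Fc, eca. rewrite H1, H2, H3. reflexivity. Qed.

Lemma setting_inst : forall u z, u <> [] ->
  setting (Fc (periodic u)) (Fc (patch u z)) (Z.of_nat (length u)) (-1) (Z.of_nat (length z)).
Proof.
  intros u z Hu. split; [|split].
  - destruct u; [congruence|simpl; lia].
  - intros k t. unfold Fc, eca.
    replace (k + Z.of_nat (length u) * t - 1) with (k - 1 + Z.of_nat (length u) * t) by lia.
    replace (k + Z.of_nat (length u) * t + 1) with (k + 1 + Z.of_nat (length u) * t) by lia.
    rewrite !periodic_add by auto. reflexivity.
  - intros j Hj. apply Fc_agree; apply patch_out; lia.
Qed.

Lemma SInv_Phi : forall u z, u <> [] ->
  (SInv 27 u z <-> Phi (Fc (periodic u)) (Fc (patch u z))).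
Proof.
  intros u z Hu. rewrite SInv_iff. pose proof (setting_inst u z Hu) as HS. split.
  - apply (charH_fwd _ _ _ _ _ HS).
  - apply (charH_bwd _ _ _ _ _ HS). lia.
Qed.

Lemma patch_agree : forall u z1 z2 (P : Z -> Prop), length z1 = length z2 ->
  (forall k : nat, P (Z.of_nat k) -> (k < length z1)%nat -> nth k z1 false = nth k z2 false) ->
  forall j, P j -> patch u z1 j = patch u z2 j.
Proof.
  intros u z1 z2 P Hl Hn j Hj. unfold patch. rewrite Hl.
  destruct ((0 <=? j) && (j <? Z.of_nat (length z2))) eqn:E; [|reflexivity].
  apply andb_true_iff in E. destruct E as [E1 E2]. apply Z.leb_le in E1. apply Z.ltb_lt in E2.
  apply Hn. rewrite Z2Nat.id by lia. exact Hj. lia.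
Qed.


Definition tailb (i : nat) (x : list bool) : list bool :=
  map (fun t => nth (i - 1 - t) x false) (seq 0 6).

Definition sigma (u : list bool) (n i : nat) (x : list bool) : list bool :=
  tailb i x ++ sumBits (Z.of_nat i - 4) (Fc (periodic u)) (Fc (patch u (x ++ repeat false (n - i)))).

Lemma sigma_len : forall u n i x, length (sigma u n i x) = 22%nat.
Proof. intros. unfold sigma, tailb. rewrite length_app, length_map, length_seq, sumBits_len. reflexivity. Qed.

Lemma class_transfer : forall u n i x x' y, u <> [] ->
  length x = i -> length x' = i -> length y = (n - i)%nat ->
  sigma u n i x = sigma u n i x' -> SInv 27 u (x' ++ y) -> SInv 27 u (x ++ y).
Proof.
  intros u n i x x' y Hu Hx Hx' Hy Hs HS.
  set (Q := Z.of_nat i - 4).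
  set (y0 := repeat false (n - i)).
  assert (Hy0 : length y0 = (n - i)%nat) by (unfold y0; apply repeat_length).
  assert (Htail : forall k : nat, (i - 6 <= k < i)%nat -> nth k x false = nth k x' false).
  { intros k Hk.
    assert (E := f_equal (fun l => nth (i - 1 - k) l false) Hs). cbv beta in E.
    unfold sigma in E. rewrite !app_nth1 in E by (unfold tailb; rewrite length_map, length_seq; lia).
    unfold tailb in E. rewrite !nth_map_seq in E by lia.
    replace (i - 1 - (i - 1 - k))%nat with k in E by lia. exact E. }
  assert (Hsum : sumBits Q (Fc (periodic u)) (Fc (patch u (x ++ y0))) =
                 sumBits Q (Fc (periodic u)) (Fc (patch u (x' ++ y0)))).
  { apply nth_ext with (d := false) (d' := false). { rewrite !sumBits_len. reflexivity. }
    intros k Hk. rewrite sumBits_len in Hk.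
    assert (E := f_equal (fun l => nth (6 + k) l false) Hs). cbv beta in E.
    unfold sigma in E. rewrite !app_nth2 in E by (unfold tailb; rewrite length_map, length_seq; lia).
    unfold tailb in E. rewrite !length_map, !length_seq in E.
    replace (6 + k - 6)%nat with k in E by lia. exact E. }
  apply sumBits_eq in Hsum.
  assert (Hleft : forall xx yy yy', length xx = i -> length yy = length yy' ->
     forall j, j <= Q + 2 -> Fc (patch u (xx ++ yy)) j = Fc (patch u (xx ++ yy')) j).
  { intros xx yy yy' Hxx Hyy j Hj.
    assert (Hp : forall j', j' <= Z.of_nat i - 1 -> patch u (xx ++ yy) j' = patch u (xx ++ yy') j').
    { apply patch_agree. rewrite !length_app. lia.
      intros k Hk _. rewrite !app_nth1 by lia. reflexivity. }
    unfold Q in Hj. apply Fc_agree; apply Hp; lia. }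
  assert (Hright : forall j, Q - 1 <= j -> Fc (patch u (x' ++ y)) j = Fc (patch u (x ++ y)) j).
  { intros j Hj.
    assert (Hp : forall j', Z.of_nat i - 6 <= j' -> patch u (x' ++ y) j' = patch u (x ++ y) j').
    { apply patch_agree. rewrite !length_app. lia.
      intros k Hk _. destruct (Nat.lt_ge_cases k i).
      - rewrite !app_nth1 by lia. symmetry. apply Htail. lia.
      - rewrite !app_nth2 by lia. rewrite Hx, Hx'. reflexivity. }
    unfold Q in Hj. apply Fc_agree; apply Hp; lia. }
  assert (HE1 : SumEq Q (Fc (periodic u)) (Fc (patch u (x' ++ y))) (Fc (patch u (x' ++ y0)))).
  { apply left_sumeq. apply Hleft; lia. }
  assert (HE3 : SumEq Q (Fc (periodic u)) (Fc (patch u (x ++ y0))) (Fc (patch u (x ++ y)))).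
  { apply left_sumeq. apply Hleft; lia. }
  assert (HE : SumEq Q (Fc (periodic u)) (Fc (patch u (x' ++ y))) (Fc (patch u (x ++ y)))).
  { eapply SumEq_trans; [exact HE1|]. eapply SumEq_trans; [|exact HE3]. apply SumEq_sym. exact Hsum. }
  apply SInv_Phi; auto. apply SInv_Phi in HS; auto.
  eapply Phi_transfer; eauto.
Qed.

Theorem mainTheorem12 :
  forall u : list bool, u <> [] ->
    exists C : nat, forall n : nat, comm_complexity_le (SInv 27 u) n C.
Proof.
  intros u Hu. exists 23%nat. intros n i Hi.
  set (fs := map (fun k (x : list bool) => nth k (sigma u n i x) false) (seq 0 22)).
  set (g := fun (bs : list bool) (y : list bool) =>
        dec (exists x', length x' = i /\ map (fun f => f x') fs = bs /\ SInv 27 u (x' ++ y))).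
  exists (build fs g). split.
  - rewrite depth_build. unfold fs. rewrite length_map, length_seq. lia.
  - intros x y Hx Hy. rewrite eval_build. unfold g, dec.
    destruct (excluded_middle_informative _) as [[x' [Hx' [Hm HS]]]|Hn].
    + split; [intros _|intros _; reflexivity].
      apply (class_transfer u n i x x' y Hu Hx Hx' Hy); [|exact HS].
      unfold fs in Hm. rewrite !map_map in Hm.
      apply nth_ext with (d := false) (d' := false). { rewrite !sigma_len. reflexivity. }
      intros k Hk. rewrite sigma_len in Hk.
      assert (E := f_equal (fun l => nth k l false) Hm). cbv beta in E.
      rewrite !nth_map_seq in E by lia. symmetry. exact E.
    + split; [intro C; discriminate|]. intro HS. exfalso. apply Hn. exists x. auto.
Qed.
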